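(* Let $M=\{u=F(z,\zeta,\bar z,\bar\zeta)\}\subset\mathbb{C}^3$ be a rigid real-analytic hypersurface through the origin whose Levi form has constant rank $1$ near $0$ (i.e. $F_{z\bar z}F_{\zeta\bar\zeta}-F_{\zeta\bar z}F_{z\bar\zeta}\equiv0$), and which is prenormalized, i.e. $F(z,\zeta,\bar z,0)=z\bar z+\frac12\zeta\bar z^2+O_{\bar z}(3)$. Let $m:=\frac{z\bar z+\frac12z^2\bar\zeta+\frac12\bar z^2\zeta}{1-\zeta\bar\zeta}$ and $G:=F-m$. Then $G=O_{z,\bar z}(3)$, i.e. every monomial $z^a\zeta^b\bar z^c\bar\zeta^d$ occurring in the Taylor expansion of $G$ at $0$ has $a+c\geq3$.
   Context: Coordinates on $\mathbb{C}^3$ are $(z,\zeta,w)$, $w=u+iv$; $F$ is real-valued. $O_{\bar z}(3)$ denotes $\bar z^3\cdot(\text{convergent power series in }(z,\zeta,\bar z,\bar\zeta))$. *)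

(* Defs.v *)
From HB Require Import structures.
From mathcomp Require Import all_boot all_order all_algebra.
From mathcomp Require Import reals.
From mathcomp Require Import complex.
Set Implicit Arguments. Unset Strict Implicit. Unset Printing Implicit Defensive.
Import Order.TTheory GRing.Theory Num.Theory.
Local Open Scope ring_scope.
Local Open Scope complex_scope.

(* A power series in the variables (z, zeta, zbar, zetabar), given by its
   coefficients: s a b c d is the coefficient of z^a zeta^b zbar^c zetabar^d. *)
Definition pseries (R : realType) := nat -> nat -> nat -> nat -> R[i].

(* Convergence (on some polydisc around 0): Cauchy-type coefficient bounds. *)
Definition convergent (R : realType) (s : pseries R) : Prop :=
  exists r K : R, 0 < r /\
    forall a b c d, `|s a b c d| * (r%:C) ^+ (a + b + c + d) <= K%:C.

(* Real-valuedness of the function (z,zeta) |-> s(z,zeta,conj z,conj zeta):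
   conjugating swaps (z,zeta) with (zbar,zetabar). *)
Definition real_valued (R : realType) (s : pseries R) : Prop :=
  forall a b c d, (s a b c d)^* = s c d a b.

Definition d_z (R : realType) (s : pseries R) : pseries R :=
  fun a b c d => (a.+1)%:R * s a.+1 b c d.
Definition d_zeta (R : realType) (s : pseries R) : pseries R :=
  fun a b c d => (b.+1)%:R * s a b.+1 c d.
Definition d_zbar (R : realType) (s : pseries R) : pseries R :=
  fun a b c d => (c.+1)%:R * s a b c.+1 d.
Definition d_zetabar (R : realType) (s : pseries R) : pseries R :=
  fun a b c d => (d.+1)%:R * s a b c d.+1.

Definition ps_mul (R : realType) (f g : pseries R) : pseries R :=
  fun a b c d =>
    \sum_(i < a.+1) \sum_(j < b.+1) \sum_(k < c.+1) \sum_(l < d.+1)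
      f i j k l * g (a - i)%N (b - j)%N (c - k)%N (d - l)%N.
Definition ps_sub (R : realType) (f g : pseries R) : pseries R :=
  fun a b c d => f a b c d - g a b c d.

Definition levi_det (R : realType) (F : pseries R) : pseries R :=
  ps_sub (ps_mul (d_zbar (d_z F)) (d_zetabar (d_zeta F)))
         (ps_mul (d_zbar (d_zeta F)) (d_zetabar (d_z F))).

(* Prenormalization: F(z,zeta,zbar,0) = z zbar + 1/2 zeta zbar^2 + O_zbar(3),
   i.e. the coefficients with d = 0 and c <= 2 are those of z zbar + 1/2 zeta zbar^2. *)
Definition prenormalized (R : realType) (F : pseries R) : Prop :=
  forall a b c, (c <= 2)%N ->
    F a b c 0%N =
      (if [&& a == 1%N, b == 0%N & c == 1%N] then 1 else 0)
    + (if [&& a == 0%N, b == 1%N & c == 2%N] then 2^-1 else 0).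

Definition m_num (R : realType) : pseries R :=
  fun a b c d =>
      (if [&& a == 1%N, b == 0%N, c == 1%N & d == 0%N] then 1 else 0)
    + (if [&& a == 2%N, b == 0%N, c == 0%N & d == 1%N] then 2^-1 else 0)
    + (if [&& a == 0%N, b == 1%N, c == 2%N & d == 0%N] then 2^-1 else 0).

(* 1/(1 - zeta zetabar) = sum_k (zeta zetabar)^k. *)
Definition geom_zz (R : realType) : pseries R :=
  fun a b c d => if [&& a == 0%N, c == 0%N & b == d] then 1 else 0.

Definition m_series (R : realType) : pseries R := ps_mul (@m_num R) (@geom_zz R).

(* Main.v *)
Require Import Defs.
From HB Require Import structures.
From mathcomp Require Import all_boot all_order all_algebra.
From mathcomp Require Import reals complex.
From mathcomp Require Import ring lra zify.
Import Order.TTheory GRing.Theory Num.Theory.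
Local Open Scope ring_scope.

Section S.
Variable V : zmodType.

Lemma sum_single_nat (n x : nat) (h : nat -> V) :
  (forall i, (i < n)%N -> i != x -> h i = 0) ->
  \sum_(i < n) h i = if (x < n)%N then h x else 0.
Proof.
elim: n => [|n IH] H; first by rewrite big_ord0.
rewrite big_ord_recr /= IH; last by move=> i Hi; apply: H; rewrite ltnS ltnW.
case: (ltngtP x n) => Hx.
- have -> : (x < n.+1)%N = true by lia.
  rewrite (H n) ?addr0 //; apply/eqP; lia.
- have -> : (x < n.+1)%N = false by lia.
  rewrite (H n) ?addr0 //; apply/eqP; lia.
- by rewrite Hx ltnSn add0r.
Qed.

Lemma leqo n (i : 'I_n.+1) : (i <= n)%N.
Proof. exact: ltn_ord i. Qed.

Definition S4 (h : nat -> nat -> nat -> nat -> V) A B C D :=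
  \sum_(i < A.+1) \sum_(j < B.+1) \sum_(k < C.+1) \sum_(l < D.+1) h i j k l.

Lemma S4_pick h A B C D i0 k0 : (i0 <= A)%N -> (k0 <= C)%N ->
  (forall i j k l, (i <= A)%N -> (j <= B)%N -> (k <= C)%N -> (l <= D)%N ->
     (i != i0) || (k != k0) -> h i j k l = 0) ->
  S4 h A B C D = \sum_(j < B.+1) \sum_(l < D.+1) h i0 j k0 l.
Proof.
move=> Hi Hk H; rewrite /S4.
rewrite (@sum_single_nat _ i0 (fun i => \sum_(j < B.+1) \sum_(k < C.+1) \sum_(l < D.+1) h i j k l)); last first.
  move=> i Hi' Hne; apply: big1 => j _; apply: big1 => k _; apply: big1 => l _.
  by apply: H; rewrite ?leqo // Hne.
rewrite ltnS Hi; apply: eq_bigr => j _.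
rewrite (@sum_single_nat _ k0 (fun k => \sum_(l < D.+1) h i0 j k l)); last first.
  move=> k Hk' Hne; apply: big1 => l _.
  by apply: H; rewrite ?leqo // Hne orbT.
by rewrite ltnS Hk.
Qed.

Lemma sum2_diag (g : nat -> nat -> V) B D s :
  (forall j l, (j <= B)%N -> (l <= D)%N -> l != (j + s)%N -> g j l = 0) ->
  \sum_(j < B.+1) \sum_(l < D.+1) g j l =
  \sum_(j < B.+1) (if (j + s <= D)%N then g j (j + s)%N else 0).
Proof.
move=> H; apply: eq_bigr => j _.
rewrite (@sum_single_nat _ (j + s)%N) ?ltnS //.
by move=> l Hl Hne; apply: H; rewrite ?leqo.
Qed.

Lemma S4_single h A B C D :
  (forall i j k l, (i <= A)%N -> (j <= B)%N -> (k <= C)%N -> (l <= D)%N ->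
     ((i + j + k + l) != 0)%N -> h i j k l = 0) ->
  S4 h A B C D = h 0%N 0%N 0%N 0%N.
Proof.
move=> H; rewrite (@S4_pick _ _ _ _ _ 0%N 0%N) //; last first.
  move=> i j k l Hi Hj Hk Hl Hne; apply: H => //.
  by case/orP: Hne; rewrite -!lt0n => ?; lia.
rewrite (@sum2_diag (fun j l => h 0%N j 0%N l) B D 0%N); last first.
  move=> j l Hj Hl Hne; apply: H => //; rewrite addn0 in Hne; lia.
rewrite (@sum_single_nat _ 0%N (fun j => if (j + 0 <= D)%N then h 0%N j 0%N (j + 0)%N else 0)) //.
move=> j Hj Hne; rewrite addn0 /=; case: ifP => // Hd; apply: H => //; lia.
Qed.

Lemma S4_zero h A B C D :
  (forall i j k l, (i <= A)%N -> (j <= B)%N -> (k <= C)%N -> (l <= D)%N ->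
     h i j k l = 0) -> S4 h A B C D = 0.
Proof.
move=> H; apply: big1 => i _; apply: big1 => j _; apply: big1 => k _; apply: big1 => l _.
by apply: H; rewrite ?leqo.
Qed.

Lemma S4_eq h1 h2 A B C D :
  (forall i j k l, (i <= A)%N -> (j <= B)%N -> (k <= C)%N -> (l <= D)%N ->
     h1 i j k l = h2 i j k l) -> S4 h1 A B C D = S4 h2 A B C D.
Proof.
move=> H; apply: eq_bigr => i _; apply: eq_bigr => j _; apply: eq_bigr => k _; apply: eq_bigr => l _.
by apply: H; rewrite ?leqo.
Qed.

Lemma S4_sub h1 h2 A B C D :
  S4 h1 A B C D - S4 h2 A B C D = S4 (fun i j k l => h1 i j k l - h2 i j k l) A B C D.
Proof.
rewrite /S4 -sumrB; apply: eq_bigr => i _; rewrite -sumrB; apply: eq_bigr => j _.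
rewrite -sumrB; apply: eq_bigr => k _; by rewrite -sumrB.
Qed.
End S.

Arguments S4 {V}.

Lemma S4_eq_but0 (V : zmodType) (h1 h2 : nat -> nat -> nat -> nat -> V) A B C D :
  (forall i j k l, (i <= A)%N -> (j <= B)%N -> (k <= C)%N -> (l <= D)%N ->
     ((i + j + k + l) != 0)%N -> h1 i j k l = h2 i j k l) ->
  S4 h1 A B C D = S4 h2 A B C D + (h1 0%N 0%N 0%N 0%N - h2 0%N 0%N 0%N 0%N).
Proof.
move=> H; apply/eqP; rewrite addrC -subr_eq S4_sub; apply/eqP.
rewrite (@S4_single _ (fun i j k l => h1 i j k l - h2 i j k l)) // => i j k l *.
by rewrite H ?subrr.
Qed.

Lemma sum2_single (V : zmodType) (g : nat -> nat -> V) B D j0 l0 :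
  (forall j l, (j <= B)%N -> (l <= D)%N -> (j != j0) || (l != l0) -> g j l = 0) ->
  \sum_(j < B.+1) \sum_(l < D.+1) g j l = if (j0 <= B)%N && (l0 <= D)%N then g j0 l0 else 0.
Proof.
move=> H.
rewrite (@sum_single_nat _ _ j0 (fun j => \sum_(l < D.+1) g j l)); last first.
  move=> j Hj Hne; apply: big1 => l _; apply: H; rewrite ?leqo ?Hne //.
rewrite ltnS; case HB: (j0 <= B)%N => //=.
rewrite (@sum_single_nat _ _ l0 (g j0)) ?ltnS //.
move=> l Hl Hne; apply: H; rewrite ?Hne ?orbT //.

Qed.

Lemma S4_split (V : zmodType) (h : nat -> nat -> nat -> nat -> V) A B C D i0 k0 :
  S4 h A B C D = S4 (fun i j k l => if (i == i0) && (k == k0) then h i j k l else 0) A B C D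
     + S4 (fun i j k l => if (i == i0) && (k == k0) then 0 else h i j k l) A B C D.
Proof.
apply/eqP; rewrite addrC -subr_eq S4_sub; apply/eqP; apply: S4_eq => i j k l *.
by case: ifP => _; rewrite ?subr0 ?subrr.
Qed.

Section NatIds.
Local Open Scope nat_scope.
Lemma T1 n : 2 * \sum_(j < n.+1) j.+1 = n.+1 * n.+2.
Proof.
elim: n => [|n IH]; first by rewrite big_ord1.
rewrite big_ord_recr /= mulnDr IH; nia.
Qed.

Lemma L1 n : 3 * \sum_(j < n.+1) ((n - j).+2 * (n - j).+1) = n.+1 * n.+2 * n.+3.
Proof.
elim: n => [|n IH]; first by rewrite big_ord1.
rewrite big_ord_recl mulnDr IH subn0; nia.
Qed.

Lemma L2 n : 6 * \sum_(j < n.+1) (j.+1 * (n - j).+1) = n.+1 * n.+2 * n.+3.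
Proof.
elim: n => [|n IH]; first by rewrite big_ord1.
rewrite big_ord_recr /=.
rewrite (eq_bigr (fun j : 'I_n.+1 => j.+1 * (n - j).+1 + j.+1)); last first.
  move=> j _; have := ltn_ord j; rewrite /=; move=> Hj.
  rewrite subSn; [nia | by rewrite -ltnS].
rewrite big_split /= mulnDr mulnDr IH.
have HT := T1 n; rewrite subnn.
have -> : 6 * \sum_(i < n.+1) i.+1 = 3 * (n.+1 * n.+2) by rewrite -HT mulnA.
nia.
Qed.

Lemma L3 n : 6 * \sum_(j < n.+1) ((n - j).+1 * (n - j).+1) = n.+1 * n.+2 * (2 * n + 3).
Proof.
elim: n => [|n IH]; first by rewrite big_ord1.
rewrite big_ord_recl mulnDr IH subn0; nia.
Qed.

Lemma L4 n : 6 * \sum_(j < n.+1) (j.+1 * (n - j)) = n * n.+1 * n.+2.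
Proof.
case: n => [|n]; first by rewrite big_ord1.
rewrite big_ord_recr /= subnn muln0 addn0.
rewrite (eq_bigr (fun j : 'I_n.+1 => j.+1 * (n - j).+1)); last first.
  move=> j _; have := ltn_ord j; rewrite /= => Hj.
  by rewrite subSn // -ltnS.
by rewrite L2.
Qed.

Lemma L12 n : \sum_(j < n.+1) ((n - j).+2 * (n - j).+1) = 2 * \sum_(j < n.+1) (j.+1 * (n - j).+1).
Proof.
move: (L1 n) (L2 n).
set X := \sum_(j < n.+1) _; set Y := \sum_(j < n.+1) _.
set P := (n.+1 * n.+2 * n.+3); lia.
Qed.

Lemma L34 n : \sum_(j < n.+1) ((n - j).+1 * (n - j).+1) =
   \sum_(j < n.+1) (j.+1 * (n - j)) + \sum_(j < n.+1) (j.+1 * (n - j).+1).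
Proof.
move: (L3 n) (L4 n) (L2 n).
set X := \sum_(j < n.+1) _; set Y := \sum_(j < n.+1) _; set Z := \sum_(j < n.+1) _.
move=> h3 h4 h2.
have : 6 * X = 6 * (Y + Z) by rewrite mulnDr h3 h4 h2; nia.
lia.
Qed.

End NatIds.

Section T.
Variable R : realType.
Local Notation C := (R[i]).

Definition PQ (G : pseries R) (a b c d : nat) : nat -> nat -> nat -> nat -> C :=
  fun i j k l => ((k.+1)%:R * ((i.+1)%:R * G i.+1 j k.+1 l)) *
     (((d - l).+1)%:R * (((b - j).+1)%:R * G (a - i)%N (b - j).+1 (c - k)%N (d - l).+1)).
Definition RS (G : pseries R) (a b c d : nat) : nat -> nat -> nat -> nat -> C :=
  fun i j k l => ((k.+1)%:R * ((j.+1)%:R * G i j.+1 k.+1 l)) *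
     (((d - l).+1)%:R * (((a - i).+1)%:R * G (a - i).+1 (b - j)%N (c - k)%N (d - l).+1)).

Lemma leviE G a b c d :
  levi_det G a b c d = S4 (PQ G a b c d) a b c d - S4 (RS G a b c d) a b c d.
Proof. by []. Qed.

Definition pre (a b c : nat) : C :=
  (if [&& a == 1%N, b == 0%N & c == 1%N] then 1 else 0)
    + (if [&& a == 0%N, b == 1%N & c == 2%N] then 2^-1 else 0).

Lemma conj_pre a b c : conjc (pre a b c) = pre a b c.
Proof.
rewrite /pre rmorphD /=; congr (_ + _); case: ifP => _; rewrite ?rmorph0 ?rmorph1 //.
by rewrite fmorphV rmorph_nat.
Qed.

Lemma term0 (n1 n2 n3 n4 x y : C) : (x != 0 -> y != 0 -> False) ->
  (n1 * (n2 * x)) * (n3 * (n4 * y)) = 0.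
Proof.
move=> H; case: (eqVneq x 0) => [->|hx]; first by rewrite !mulr0 mul0r.
case: (eqVneq y 0) => [->|hy]; first by rewrite !mulr0.
by case: (H hx hy).
Qed.

Lemma termx0 (n1 n2 n3 n4 x y : C) : x = 0 -> (n1 * (n2 * x)) * (n3 * (n4 * y)) = 0.
Proof. by move=> ->; rewrite !mulr0 mul0r. Qed.
Lemma termy0 (n1 n2 n3 n4 x y : C) : y = 0 -> (n1 * (n2 * x)) * (n3 * (n4 * y)) = 0.
Proof. by move=> ->; rewrite !mulr0. Qed.

Definition mex : pseries R := fun a b c d =>
  match a, c with
  | 1%N, 1%N => if b == d then 1 else 0
  | 2%N, 0%N => if d == b.+1 then 2^-1 else 0
  | 0%N, 2%N => if b == d.+1 then 2^-1 else 0
  | _, _ => 0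
  end.

Lemma mex_w a b c d : (a + c != 2)%N -> mex a b c d = 0.
Proof. by case: a c => [|[|[|a]]] [|[|[|c]]]. Qed.

Lemma mexP a b c d : mex a b c d != 0 ->
  [\/ [/\ a = 1, c = 1 & b = d], [/\ a = 2, c = 0 & d = b.+1] | [/\ a = 0, c = 2 & b = d.+1]]%N.
Proof.
rewrite /mex; case: a c => [|[|[|a]]] [|[|[|c]]]; rewrite ?eqxx //; case: ifP => [/eqP ->|]; rewrite ?eqxx // => _.
- by constructor 3.
- by constructor 1.
- by constructor 2.
Qed.

Ltac ztac := apply: term0;
  move=> /mexP [[? ? ?]|[? ? ?]|[? ? ?]] /mexP [[? ? ?]|[? ? ?]|[? ? ?]]; lia.

Lemma mex_levi20 b d : levi_det mex 2 b 0 d = 0.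
Proof.
rewrite leviE.
case: (eqVneq d b.+1) => [->|Hd]; last first.
  rewrite (@S4_zero _ (PQ mex 2 b 0 d)) ?(@S4_zero _ (RS mex 2 b 0 d)) ?subrr //;
   move=> i j k l Hi Hj Hk Hl; rewrite /PQ /RS; ztac.
rewrite (@S4_pick _ (PQ mex 2 b 0 b.+1) 2 b 0 b.+1 0 0) //; last first.
  move=> i j k l Hi Hj Hk Hl Hne; rewrite /PQ; ztac.
rewrite (@S4_pick _ (RS mex 2 b 0 b.+1) 2 b 0 b.+1 1 0) //; last first.
  move=> i j k l Hi Hj Hk Hl Hne; rewrite /RS; ztac.
rewrite (@sum2_diag _ (fun j l => PQ mex 2 b 0 b.+1 0 j 0 l) b b.+1 0); last first.
  move=> j l Hj Hl Hne; rewrite /PQ; ztac.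
rewrite (@sum2_diag _ (fun j l => RS mex 2 b 0 b.+1 1 j 0 l) b b.+1 1); last first.
  move=> j l Hj Hl Hne; rewrite /RS; ztac.
apply/eqP; rewrite subr_eq0; apply/eqP.
rewrite (eq_bigr (fun j : 'I_b.+1 => ((b - j).+2 * (b - j).+1)%:R * 2^-1)); last first.
  move=> j _; have Hj : (j <= b)%N := @leqo _ j; rewrite addn0 ifT; last lia.
  by rewrite /PQ /= eqxx subSn // eqxx !mul1r natrM mulrA.
rewrite [RHS](eq_bigr (fun j : 'I_b.+1 => (j.+1 * (b - j).+1)%:R)); last first.
  move=> j _; have Hj : (j <= b)%N := @leqo _ j; rewrite addn1 ifT; last lia.
  rewrite /RS /= !eqxx subSS ?eqxx (_ : (2 - 1).+1 = 2)%N // !mul1r !mulr1.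
  by rewrite mulfV ?pnatr_eq0 // mulr1 natrM.
rewrite -mulr_suml -!natr_sum L12 natrM mulrAC mulfV ?pnatr_eq0 // mul1r.
by congr (_ %:R); apply: eq_bigr.
Qed.

Lemma mex_levi02 b d : levi_det mex 0 b 2 d = 0.
Proof.
rewrite leviE.
case: (eqVneq b d.+1) => [->|Hd]; last first.
  rewrite (@S4_zero _ (PQ mex 0 b 2 d)) ?(@S4_zero _ (RS mex 0 b 2 d)) ?subrr //;
   move=> i j k l Hi Hj Hk Hl; rewrite /PQ /RS; ztac.
rewrite (@S4_pick _ (PQ mex 0 d.+1 2 d) 0 d.+1 2 d 0 0) //; last first.
  move=> i j k l Hi Hj Hk Hl Hne; rewrite /PQ; ztac.
rewrite (@S4_pick _ (RS mex 0 d.+1 2 d) 0 d.+1 2 d 0 1) //; last first.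
  move=> i j k l Hi Hj Hk Hl Hne; rewrite /RS; ztac.
rewrite (@sum2_diag _ (fun j l => PQ mex 0 d.+1 2 d 0 j 0 l) d.+1 d 0); last first.
  move=> j l Hj Hl Hne; rewrite /PQ; ztac.
rewrite (@sum2_diag _ (fun j l => RS mex 0 d.+1 2 d 0 j 1 l) d.+1 d 0); last first.
  move=> j l Hj Hl Hne; rewrite /RS; ztac.
apply/eqP; rewrite subr_eq0; apply/eqP.
rewrite big_ord_recr [RHS]big_ord_recr /= !addn0 ltnn !addr0.
rewrite (eq_bigr (fun j : 'I_d.+1 => ((d - j).+2 * (d - j).+1)%:R * 2^-1)); last first.
  move=> j _; have Hj : (j <= d)%N := @leqo _ j; rewrite addn0 ifT //.
  rewrite /PQ /= eqxx subSn // eqxx natrM; ring.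
rewrite [RHS](eq_bigr (fun j : 'I_d.+1 => (j.+1 * (d - j).+1)%:R)); last first.
  move=> j _; have Hj : (j <= d)%N := @leqo _ j; rewrite addn0 ifT //.
  by rewrite /RS /= eqxx subSn // eqxx subnn natrM; field.
rewrite -mulr_suml -!natr_sum L12 natrM mulrAC mulfV ?pnatr_eq0 // mul1r.
by congr (_ %:R); apply: eq_bigr.
Qed.

Lemma mex_levi11 b d : levi_det mex 1 b 1 d = 0.
Proof.
rewrite leviE.
case: (eqVneq b d) => [->|Hd]; last first.
  rewrite (@S4_zero _ (PQ mex 1 b 1 d)) ?(@S4_zero _ (RS mex 1 b 1 d)) ?subrr //;
   move=> i j k l Hi Hj Hk Hl; rewrite /PQ /RS; ztac.
rewrite (@S4_pick _ (PQ mex 1 d 1 d) 1 d 1 d 0 0) //; last first.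
  move=> i j k l Hi Hj Hk Hl Hne; rewrite /PQ; ztac.
rewrite (@S4_split _ (RS mex 1 d 1 d) 1 d 1 d 1 0).
rewrite (@S4_pick _ (fun i j k l => if (i == 1%N) && (k == 0%N) then RS mex 1 d 1 d i j k l else 0) 1 d 1 d 1 0) //; last first.
  move=> i j k l Hi Hj Hk Hl Hne; case: ifP => // /andP [/eqP ? /eqP ?]; subst; by rewrite !eqxx in Hne.
rewrite (@S4_pick _ (fun i j k l => if (i == 1%N) && (k == 0%N) then 0 else RS mex 1 d 1 d i j k l) 1 d 1 d 0 1) //; last first.
  move=> i j k l Hi Hj Hk Hl Hne; case: ifP => // Hik; rewrite /RS; ztac.
rewrite (@sum2_diag _ (fun j l => PQ mex 1 d 1 d 0 j 0 l) d d 0); last first.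
  move=> j l Hj Hl Hne; rewrite /PQ; ztac.
rewrite (@sum2_diag _ (fun j l => RS mex 1 d 1 d 1 j 0 l) d d 1); last first.
  move=> j l Hj Hl Hne; rewrite /RS; ztac.
rewrite (@sum2_diag _ (fun j l => RS mex 1 d 1 d 0 j 1 l) d d 0); last first.
  move=> j l Hj Hl Hne; rewrite /RS; ztac.
apply/eqP; rewrite subr_eq0; apply/eqP.
rewrite (eq_bigr (fun j : 'I_d.+1 => ((d - j).+1 * (d - j).+1)%:R)); last first.
  move=> j _; have Hj : (j <= d)%N := @leqo _ j; rewrite addn0 ifT //.
  rewrite /PQ /= !eqxx natrM; ring.
rewrite [in RHS](eq_bigr (fun j : 'I_d.+1 => (j.+1 * (d - j))%:R)); last first.
  move=> j _; have Hj : (j <= d)%N := @leqo _ j; rewrite addn1.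
  case: (ltnP j d) => Hjd; last first.
    have -> : (d - j = 0)%N by lia.
    by rewrite muln0.
  by rewrite /RS /= eqxx subnSK // subnn eqxx natrM; ring.
have -> : \sum_(j < d.+1) (if (j + 0 <= d)%N then RS mex 1 d 1 d 0 j 1 (j + 0) else 0)
   = \sum_(j < d.+1) (j.+1 * (d - j).+1)%:R.
  apply: eq_bigr => j _; have Hj : (j <= d)%N := @leqo _ j; rewrite addn0 ifT //.
  by rewrite /RS /= !eqxx subn0 natrM; field.
by rewrite -!natr_sum -natrD L34.
Qed.

Lemma mex_levi a b c d : (a + c = 2)%N -> levi_det mex a b c d = 0.
Proof.
case: a c => [|[|[|a]]] [|[|[|c]]] // H; try lia.
- exact: mex_levi02.
- exact: mex_levi11.
- exact: mex_levi20.
Qed.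

Definition MG (a b c d : nat) : nat -> nat -> nat -> nat -> R[i] :=
  fun i j k l => m_num R i j k l * geom_zz R (a - i)%N (b - j)%N (c - k)%N (d - l)%N.

Lemma mseriesE0 a b c d : @m_series R a b c d = mex a b c d.
Proof.
rewrite (_ : m_series R a b c d = S4 (MG a b c d) a b c d) //.
rewrite (@S4_pick _ (MG a b c d) a b c d a c) //; last first.
  move=> i j k l Hi Hj Hk Hl Hne; rewrite /MG /geom_zz.
  case: ifP => [/and3P [/eqP ? /eqP ? _]|_]; last by rewrite mulr0.
  move: Hne; case: eqP; case: eqP => //=; lia.

case: a => [|[|[|a]]]; case: c => [|[|[|c]]];
  try (apply: big1 => j _; apply: big1 => l _; by rewrite /MG /m_num /= ?andbF /= !addr0 mul0r).
- rewrite (@sum2_single _ (fun j l => MG 0 b 2 d 0 j 2 l) b d 1 0); last first.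
    move=> j l _ _ Hne; rewrite /MG /m_num /=.
    case: ifP => [/andP [/eqP ? /eqP ?]|_]; last by rewrite !addr0 mul0r.
    by subst; rewrite eqxx in Hne.
  case: b => [|b] /=; rewrite ?leq0n /= /MG /m_num /geom_zz /= ?subn0 ?subn1 //=.
  by rewrite !add0r eqSS; case: (b == d); rewrite ?mulr1 ?mulr0.
- rewrite (@sum2_single _ (fun j l => MG 1 b 1 d 1 j 1 l) b d 0 0); last first.
    move=> j l _ _ Hne; rewrite /MG /m_num /= ?andbF /=.
    case: ifP => [/andP [/eqP ? /eqP ?]|_]; last by rewrite !addr0 mul0r.
    by subst; rewrite eqxx in Hne.
  rewrite /= /MG /m_num /geom_zz /= ?subn0 !addr0 mul1r.
  by case: (b == d).
- rewrite (@sum2_single _ (fun j l => MG 2 b 0 d 2 j 0 l) b d 0 1); last first.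
    move=> j l _ _ Hne; rewrite /MG /m_num /= ?andbF /=.
    case: ifP => [/andP [/eqP ? /eqP ?]|_]; last by rewrite !addr0 mul0r.
    by subst; rewrite eqxx in Hne.
  case: d => [|d] /=; rewrite ?leq0n /= /MG /m_num /geom_zz /= ?subn0 ?subn1 //=.
  by rewrite add0r addr0 eqSS (eq_sym d); case: (b == d); rewrite ?mulr1 ?mulr0.
Qed.

Lemma mseriesE a b c d : @m_series R a b c d = mex a b c d.
Proof. exact: mseriesE0. Qed.

Variable F : pseries R.
Hypothesis Hreal : real_valued F.
Hypothesis Hlevi : forall a b c d, levi_det F a b c d = 0.
Hypothesis Hpre : prenormalized F.

Lemma D0 a b c : (c <= 2)%N -> F a b c 0%N = pre a b c.
Proof. exact: Hpre. Qed.

Lemma D1 a c d : (a <= 2)%N -> F a 0%N c d = pre c d a.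
Proof. by move=> Ha; rewrite -Hreal D0 // conj_pre. Qed.

Lemma F1010 : F 1 0 1 0 = 1.
Proof. by rewrite D0 // /pre /= addr0. Qed.

Lemma W1 n : forall a b c d, (a + c <= 1)%N -> (a + b + c + d < n)%N -> F a b c d = 0.
Proof.
elim: n => [//|n IH] a b c d Hw Hn.
case: (ltnP (a + b + c + d) n) => Hlt; first exact: IH.
have Hdeg : (a + b + c + d = n)%N by lia.
clear Hn Hlt.
case: b Hdeg => [|b'] Hdeg.
  rewrite D1; last by lia.
  rewrite /pre; case: a c Hw {Hdeg} => [|[|a]] [|[|c]] //= _; rewrite ?andbF /=; by rewrite ?addr0.
case: d Hdeg => [|d'] Hdeg.
  rewrite D0; last by lia.
  rewrite /pre; case: a c Hw {Hdeg} => [|[|a]] [|[|c]] //= _; rewrite ?andbF /=; by rewrite ?addr0.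
have L := Hlevi a b' c d'.
rewrite leviE (@S4_single _ (PQ F a b' c d')) in L; last first.
  move=> i j k l Hi Hj Hk Hl Hne; apply: termy0; apply: IH; lia.
rewrite (@S4_zero _ (RS F a b' c d')) in L; last first.
  move=> i j k l Hi Hj Hk Hl; rewrite /RS.
  case: (posnP (i + k)) => Hik.
    have [Hlow|Hhigh] := ltnP (j + l + 2) n.
      by apply: termx0; apply: IH; lia.
    apply: termy0.
    have -> : ((a - i).+1 = 1)%N by lia.
    have -> : (b' - j = 0)%N by lia.
    have -> : (c - k = 0)%N by lia.
    have -> : ((d' - l).+1 = 1)%N by lia.
    by rewrite D1 // /pre /= addr0.
  by apply: termy0; apply: IH; lia.
move: L; rewrite subr0 /PQ !subn0 F1010 !mul1r => /eqP.
rewrite !mulf_eq0 !pnatr_eq0 /= => /eqP //.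
Qed.

Lemma W1' a b c d : (a + c <= 1)%N -> F a b c d = 0.
Proof. by move=> H; apply: (@W1 (a + b + c + d).+1). Qed.

Lemma W2 n : forall a b c d, (a + c = 2)%N -> (a + b + c + d < n)%N -> F a b c d = mex a b c d.
Proof.
elim: n => [//|n IH] a b c d Hw Hn.
case: (ltnP (a + b + c + d) n) => Hlt; first exact: IH.
have Hdeg : (a + b + c + d = n)%N by lia.
clear Hn Hlt.
case: b Hdeg => [|b'] Hdeg.
  rewrite D1 //; last by lia.
  case: a c Hw {Hdeg} => [|[|[|a]]] [|[|[|c]]] Hw; try lia; case: d => [|[|d]];
    by rewrite /pre /mex /= ?addr0 ?add0r.
case: d Hdeg => [|d'] Hdeg.
  rewrite D0 //; last by lia.
  case: a c Hw {Hdeg} => [|[|[|a]]] [|[|[|c]]] Hw; try lia; case: b' => [|[|b]];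
    by rewrite /pre /mex /= ?addr0 ?add0r.
have L := Hlevi a b' c d'.
have Lm := @mex_levi a b' c d' Hw.
rewrite leviE in L; rewrite leviE in Lm.
rewrite (@S4_eq _ (RS F a b' c d') (RS mex a b' c d')) in L; last first.
  move=> i j k l Hi Hj Hk Hl; rewrite /RS.
  case: (posnP (i + k)) => Hik.
    rewrite [LHS]termx0 ?[RHS]termx0 //; first [apply: W1'; lia | apply/mex_w/eqP; lia].
  case: (leqP 2 (i + k)) => Hik2.
    rewrite [LHS]termy0 ?[RHS]termy0 //; first [apply: W1'; lia | apply/mex_w/eqP; lia].
  by rewrite (IH i) ?(IH (a - i).+1) //; lia.
rewrite (@S4_eq_but0 _ (PQ F a b' c d') (PQ mex a b' c d')) in L; last first.
  move=> i j k l Hi Hj Hk Hl Hne; rewrite /PQ.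
  case: (posnP (i + k)) => Hik.
    by rewrite (IH i.+1) ?(IH (a - i)%N) //; lia.
  rewrite [LHS]termy0 ?[RHS]termy0 //; first [apply: W1'; lia | apply/mex_w/eqP; lia].
move: L; rewrite -addrA (addrC (_ - _)) addrA Lm add0r /PQ !subn0 F1010 // => /eqP.
rewrite subr_eq0 /= !mul1r => /eqP /mulfI; rewrite pnatr_eq0 => /(_ isT) /mulfI.
by rewrite pnatr_eq0 => /(_ isT).
Qed.
End T.

Theorem proposition5p7 (R : realType) (F : pseries R) :
  convergent F ->
  real_valued F ->
  F 0%N 0%N 0%N 0%N = 0 ->
  (forall a b c d, levi_det F a b c d = 0) ->
  prenormalized F ->
  forall a b c d, ps_sub F (@m_series R) a b c d != 0 -> (3 <= a + c)%N.
Proof.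
move=> _ Hreal _ Hlevi Hpre a b c d.
rewrite /ps_sub mseriesE leqNgt; apply: contra => Hac.
have [H1|H2] := leqP (a + c) 1.
  by rewrite (@W1' R F Hreal Hlevi Hpre) // mex_w ?subr0 //; lia.
rewrite (@W2 R F Hreal Hlevi Hpre (a + b + c + d).+1) ?subrr //; lia.
Qed.
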